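(* Uniform (vanilla) federation is modular. That is, with $\mu_e>0,\sigma^2>0$ and error $$err_j(C)=\frac{\mu_e}{\sum_{i\in C}n_i}+\sigma^2\cdot\frac{\sum_{i\in C,i\neq j}n_i^2+\left(\sum_{i\in C,i\neq j}n_i\right)^2}{\left(\sum_{i\in C}n_i\right)^2},$$ for every coalition $C$ and players $s,l\in C$ with $n_s\le n_l$ the following hold: (P1) $\frac{err_s(C)}{err_l(C)}\ge1$, with $err_s(C)>err_l(C)$ if $n_s<n_l$; (P2) $\frac{err_s(C)}{err_l(C)}\le\frac{err_s(\{n_s,n_l\})}{err_l(\{n_s,n_l\})}$; (P3) $\frac{\partial}{\partial n_l}\frac{err_s(\{n_s,n_l\})}{err_l(\{n_s,n_l\})}\ge0$; (P4) $\frac{\partial}{\partial n_s}\frac{err_s(\{n_s,n_l\})}{err_l(\{n_s,n_l\})}\le0$; (P5) $\lim_{n_s/n_l\to0}\frac{err_s(\{n_s,n_l\})}{err_l(\{n_s,n_l\})}=\frac{\mu_e/n_l+2\sigma^2}{\mu_e/n_l}$.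
   Context: Players $i$ have sample sizes $n_i>0$; a coalition is a set of players. In the mean-estimation model, $\mu_e$ is the average sampling noise (expected variance of a player's sample distribution) and $\sigma^2$ is the variance of players' true means. Under uniform (vanilla) federation, a coalition uses the sample-weighted average of local mean estimates, giving player $j\in C$ the expected squared error in the claim. $err_s(\{n_s,n_l\})$ denotes the error of player $s$ in the two-player coalition $\{s,l\}$, viewed as a function of $n_s,n_l$ (similarly for $l$). *)

(* Defs.v *)
From HB Require Import structures.
From mathcomp Require Import all_boot all_order all_algebra.
From mathcomp Require Import all_classical all_reals all_analysis.
Set Implicit Arguments. Unset Strict Implicit. Unset Printing Implicit Defensive.
Import Order.TTheory GRing.Theory Num.Theory.
Local Open Scope ring_scope.

Definition err (R : realType) (T : finType) (mu sigma2 : R) (n : T -> R)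
    (C : {set T}) (j : T) : R :=
  mu / (\sum_(i in C) n i)
  + sigma2 * ((\sum_(i in C | i != j) n i ^+ 2) + (\sum_(i in C | i != j) n i) ^+ 2)
      / (\sum_(i in C) n i) ^+ 2.

(* Two-player coalition {s, l}: player s is [false] with size ns,
   player l is [true] with size nl. *)
Definition n2 (R : realType) (ns nl : R) : bool -> R :=
  fun b => if b then nl else ns.

Definition err_s2 (R : realType) (mu sigma2 ns nl : R) : R :=
  err mu sigma2 (n2 ns nl) [set: bool] false.
Definition err_l2 (R : realType) (mu sigma2 ns nl : R) : R :=
  err mu sigma2 (n2 ns nl) [set: bool] true.

Definition ratio2 (R : realType) (mu sigma2 ns nl : R) : R :=
  err_s2 mu sigma2 ns nl / err_l2 mu sigma2 ns nl.

(* Main.v *)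
Require Import Defs.
From HB Require Import structures.
From mathcomp Require Import all_boot all_order all_algebra.
From mathcomp Require Import all_classical all_reals all_analysis.
From mathcomp Require Import ring lra.
Import Order.TTheory GRing.Theory Num.Theory.
Import numFieldNormedType.Exports.

Local Open Scope ring_scope.

Section S.
Variable R : realType.

Lemma sum2 (F : bool -> R) : \sum_(i in [set: bool]) F i = F true + F false.
Proof. by rewrite (eq_bigl predT) ?big_bool // => i; rewrite inE. Qed.

Lemma sum2f (F : bool -> R) (j : bool) :
  \sum_(i in [set: bool] | i != j) F i = F (~~ j).
Proof.
rewrite (bigD1 (~~ j)) /=; last by rewrite inE; case: j.
rewrite big1 ?addr0 // => i; rewrite inE /=; case: i; case: j => //.
Qed.

Lemma err_s2E (mu sg a b : R) : err_s2 mu sg a b = mu / (b + a) + sg * (b ^+ 2 + b ^+ 2) / (b + a) ^+ 2.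
Proof. by rewrite /err_s2 /err sum2 !sum2f /=. Qed.
Lemma err_l2E (mu sg a b : R) : err_l2 mu sg a b = mu / (b + a) + sg * (a ^+ 2 + a ^+ 2) / (b + a) ^+ 2.
Proof. by rewrite /err_l2 /err sum2 !sum2f /=. Qed.

Lemma ratio2E (mu sg a b : R) : 0 < mu -> 0 < sg -> 0 < a -> 0 < b ->
  ratio2 mu sg a b = (mu * (a + b) + 2 * sg * b ^+ 2) / (mu * (a + b) + 2 * sg * a ^+ 2).
Proof.
move=> hm hs ha hb; rewrite /ratio2 err_s2E err_l2E.
have h1 : b + a != 0 by rewrite gt_eqF // addr_gt0.
have h2 : mu * (a + b) + 2 * sg * a ^+ 2 != 0.
  by rewrite gt_eqF // addr_gt0 // ?mulr_gt0 ?addr_gt0 // ?exprn_gt0.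
field. by rewrite h1 h2.
Qed.

Lemma divpoly_der (p q : {poly R}) x : q.[x] != 0 ->
  derivable (fun y => p.[y] / q.[y]) x 1 /\
  derive1 (fun y => p.[y] / q.[y]) x = (p^`().[x] * q.[x] - p.[x] * q^`().[x]) / q.[x] ^+ 2.
Proof.
move=> hq.
have dp : derivable (horner p) x 1 by exact: derivable_horner.
have dq : derivable (horner q) x 1 by exact: derivable_horner.
have dV : derivable (fun y => (q.[y])^-1) x 1 by exact: derivableV.
have -> : (fun y => p.[y] / q.[y]) = (horner p * (fun y => (q.[y])^-1)) by [].
split; first exact: derivableM.
rewrite derive1E deriveM // deriveV //.
rewrite !derive_val /=.
rewrite /GRing.scale /=. field. done.
Qed.

Lemma P3 (mu sg a b : R) : 0 < mu -> 0 < sg -> 0 < a -> 0 < b ->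
  derivable (fun x => ratio2 mu sg a x) b 1
      /\ 0 <= derive1 (fun x => ratio2 mu sg a x) b.
Proof.
move=> hm hs ha hb.
pose p : {poly R} := mu%:P * ('X + a%:P) + (2*sg)%:P * 'X^2.
pose q : {poly R} := mu%:P * ('X + a%:P) + (2*sg*a^+2)%:P.
have E : forall x, 0 < x -> p.[x] / q.[x] = ratio2 mu sg a x.
  move=> x hx; rewrite ratio2E //; congr (_ / _); rewrite !hornerE; ring.
have qb : 0 < q.[b].
  by rewrite !hornerE addr_gt0 ?mulr_gt0 ?addr_gt0 ?exprn_gt0.
have NE : \forall x \near b, p.[x] / q.[x] = ratio2 mu sg a x.
  by near=> x; apply: E; near: x; exact: lt_nbhsr.
have [d1 d2] := divpoly_der p q b (lt0r_neq0 qb).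
split; first exact: near_eq_derivable NE d1.
rewrite derive1E -(near_eq_derive _ NE) -derive1E d2.
apply: divr_ge0; last exact: sqr_ge0.
rewrite /p /q !poly.derivE !hornerE.
rewrite /=.
rewrite [X in 0 <= X](_ : _ = 2*sg*mu*(a+b)^+2 + 8*sg^+2*a^+2*b); last by ring.
apply/ltW; apply: addr_gt0; repeat apply: mulr_gt0 => //; by rewrite ?exprn_gt0 ?addr_gt0.
Unshelve. all: by end_near. Qed.


Lemma P4 (mu sg a b : R) : 0 < mu -> 0 < sg -> 0 < a -> 0 < b ->
  derivable (fun x => ratio2 mu sg x b) a 1
      /\ derive1 (fun x => ratio2 mu sg x b) a <= 0.
Proof.
move=> hm hs ha hb.
pose p : {poly R} := mu%:P * ('X + b%:P) + (2*sg*b^+2)%:P.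
pose q : {poly R} := mu%:P * ('X + b%:P) + (2*sg)%:P * 'X^2.
have E : forall x, 0 < x -> p.[x] / q.[x] = ratio2 mu sg x b.
  move=> x hx; rewrite ratio2E //; congr (_ / _); rewrite !hornerE /=; ring.
have qa : 0 < q.[a].
  by rewrite !hornerE /= addr_gt0 ?mulr_gt0 ?addr_gt0.
have NE : \forall x \near a, p.[x] / q.[x] = ratio2 mu sg x b.
  by near=> x; apply: E; near: x; exact: lt_nbhsr.
have [d1 d2] := divpoly_der p q a (lt0r_neq0 qa).
split; first exact: near_eq_derivable NE d1.
rewrite derive1E -(near_eq_derive _ NE) -derive1E d2.
rewrite -oppr_ge0 -mulNr.
apply: divr_ge0; last exact: sqr_ge0.
rewrite /p /q !poly.derivE !hornerE /=.
rewrite [X in 0 <= X](_ : _ = 2*sg*mu*(a+b)^+2 + 8*sg^+2*a*b^+2); last by ring.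
apply/ltW; apply: addr_gt0; repeat apply: mulr_gt0 => //; by rewrite ?exprn_gt0 ?addr_gt0.
Unshelve. all: by end_near. Qed.

End S.
Section G.
Variables (R : realType) (T : finType) (C : {set T}) (s l : T).
Hypotheses (hs : s \in C) (hl : l \in C) (hsl : s != l).

Lemma split_s (F : T -> R) : \sum_(i in C | i != s) F i
   = F l + \sum_(i in C | (i != s) && (i != l)) F i.
Proof.
rewrite (bigD1 l) /=; last by rewrite hl eq_sym hsl.
by congr (_ + _); apply: eq_bigl => i; rewrite andbA.
Qed.

Lemma split_l (F : T -> R) : \sum_(i in C | i != l) F i
   = F s + \sum_(i in C | (i != s) && (i != l)) F i.
Proof.
rewrite (bigD1 s) /=; last by rewrite hs hsl.
by congr (_ + _); apply: eq_bigl => i; rewrite -andbA (andbC (i != l)).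
Qed.

Lemma split_all (F : T -> R) : \sum_(i in C) F i
   = F s + F l + \sum_(i in C | (i != s) && (i != l)) F i.
Proof. by rewrite (bigD1 s) //= split_s addrA. Qed.

Lemma P12 (mu sg : R) (n : T -> R) : 0 < mu -> 0 < sg -> (forall i, 0 < n i) ->
  n s <= n l ->
  (1 <= err mu sg n C s / err mu sg n C l
   /\ (n s < n l -> err mu sg n C l < err mu sg n C s))
  /\ err mu sg n C s / err mu sg n C l <= ratio2 mu sg (n s) (n l).
Proof.
move=> hm hsg hn hab.
set r := \sum_(i in C | (i != s) && (i != l)) n i.
set q := \sum_(i in C | (i != s) && (i != l)) n i ^+ 2.
have r0 : 0 <= r by apply: sumr_ge0 => i _; apply: ltW.
have q0 : 0 <= q by apply: sumr_ge0 => i _; apply: sqr_ge0.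
have ha := hn s; have hb := hn l.
set a := n s in ha hab *; set b := n l in hb hab *.
have Es : err mu sg n C s = mu / (a+b+r) + sg * ((b^+2 + q) + (b + r)^+2) / (a+b+r)^+2.
  by rewrite /err split_all !split_s.
have El : err mu sg n C l = mu / (a+b+r) + sg * ((a^+2 + q) + (a + r)^+2) / (a+b+r)^+2.
  by rewrite /err split_all !split_l.
have N0 : 0 < a + b + r by lra.
have elp : 0 < err mu sg n C l.
  have h1 : 0 < a^+2 by rewrite exprn_gt0.
  have h2 : 0 <= (a+r)^+2 by rewrite sqr_ge0.
  have h3 : 0 < a ^+ 2 + q + (a + r) ^+ 2 by lra.
  by rewrite El addr_gt0 ?divr_gt0 ?exprn_gt0 // mulr_gt0.
have D : err mu sg n C s - err mu sg n C l = 2 * sg * (b - a) / (a + b + r).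
  rewrite Es El; field; exact: lt0r_neq0.
split; first split.
- rewrite ler_pdivlMr // mul1r -subr_ge0 D.
  apply: divr_ge0; [apply: mulr_ge0; [apply: mulr_ge0|] | ]; lra.
- move=> hlt; rewrite -subr_gt0 D.
  apply: divr_gt0; [apply: mulr_gt0; [apply: mulr_gt0|] | ]; lra.
- rewrite ratio2E //.
  have Y0 : 0 < mu * (a+b+r) + sg * ((a^+2 + q) + (a + r)^+2).
    have h1 : 0 < a^+2 by rewrite exprn_gt0.
    have h2 : 0 <= (a+r)^+2 by rewrite sqr_ge0.
    have h3 : 0 < a ^+ 2 + q + (a + r) ^+ 2 by lra.
    by rewrite addr_gt0 // mulr_gt0.
  have V0 : 0 < mu * (a + b) + 2 * sg * a ^+ 2.
    by rewrite addr_gt0 ?mulr_gt0 ?exprn_gt0 ?addr_gt0.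
  have -> : err mu sg n C s / err mu sg n C l =
     (mu * (a+b+r) + sg * ((b^+2 + q) + (b + r)^+2)) / (mu * (a+b+r) + sg * ((a^+2 + q) + (a + r)^+2)).
    rewrite Es El; field.
    by rewrite !lt0r_neq0.
  rewrite ler_pdivrMr // mulrAC ler_pdivlMr //.
  rewrite -subr_ge0.
  rewrite [X in 0 <= X](_ : _ = 2 * sg^+2 * (b - a) * ((a+b)*(q + r^+2) + 2*a*b*r)); last by ring.
  have hba : 0 <= b - a by rewrite subr_ge0.
  have hq2 : 0 <= q + r^+2 by rewrite addr_ge0 ?sqr_ge0.
  have h4 : 0 <= 2 * sg ^+ 2 * (b - a) by rewrite mulr_ge0 // mulr_ge0 ?sqr_ge0 //; lra.
  apply: mulr_ge0 => //; apply: addr_ge0; first by apply: mulr_ge0 => //; lra.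
  by apply: mulr_ge0 => //; apply: mulr_ge0; lra.
Qed.
End G.

Local Open Scope classical_set_scope.
Section S5.
Variable R : realType.
Lemma P5 (mu sg b : R) : 0 < mu -> 0 < sg -> 0 < b ->
  ratio2 mu sg x b @[x --> 0^'+] --> (mu / b + 2 * sg) / (mu / b).
Proof.
move=> hm hs hb.
pose p : {poly R} := mu%:P * ('X + b%:P) + (2*sg*b^+2)%:P.
pose q : {poly R} := mu%:P * ('X + b%:P) + (2*sg)%:P * 'X^2.
have E : forall x, 0 < x -> p.[x] / q.[x] = ratio2 mu sg x b.
  move=> x hx; rewrite ratio2E //; congr (_ / _); rewrite !hornerE /=; ring.
have q0 : q.[0] != 0.
  by rewrite !hornerE /= !mulr0 addr0 mulf_neq0 ?lt0r_neq0.
have [d1 _] := @divpoly_der R p q 0 q0.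
have c := differentiable_continuous (proj1 (derivable1_diffP _ _) d1).
have -> : (mu / b + 2 * sg) / (mu / b) = p.[0] / q.[0].
  rewrite !hornerE /=. field.
  by rewrite !lt0r_neq0.
apply: cvg_trans; last exact: cvg_at_right_filter c.
apply: near_eq_cvg; near=> x; apply: E.
by near: x; exact: nbhs_right_gt.
Unshelve. all: by end_near. Qed.
End S5.

Theorem lemma4p4 (R : realType) (T : finType) (mu sigma2 : R) (n : T -> R)
    (C : {set T}) (s l : T) :
  0 < mu -> 0 < sigma2 -> (forall i, 0 < n i) ->
  s \in C -> l \in C -> s != l -> n s <= n l ->
  (* (P1) *)
  (1 <= err mu sigma2 n C s / err mu sigma2 n C l
   /\ (n s < n l -> err mu sigma2 n C l < err mu sigma2 n C s))
  (* (P2) *)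
  /\ err mu sigma2 n C s / err mu sigma2 n C l <= ratio2 mu sigma2 (n s) (n l)
  (* (P3) *)
  /\ (derivable (fun x => ratio2 mu sigma2 (n s) x) (n l) 1
      /\ 0 <= derive1 (fun x => ratio2 mu sigma2 (n s) x) (n l))
  (* (P4) *)
  /\ (derivable (fun x => ratio2 mu sigma2 x (n l)) (n s) 1
      /\ derive1 (fun x => ratio2 mu sigma2 x (n l)) (n s) <= 0)
  (* (P5) *)
  /\ (ratio2 mu sigma2 x (n l) @[x --> 0^'+]
        --> (mu / n l + 2 * sigma2) / (mu / n l)).
Proof.
move=> hm hsg hn hs hl hsl hab.
have [h1 h2] := @P12 R T C s l hs hl hsl mu sigma2 n hm hsg hn hab.
split; first exact: h1.
split; first exact: h2.
split; first exact: P3.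
split; first exact: P4.
exact: P5.
Qed.
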